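(* Let $(V,E,c,p)$ be a PCSTP instance and let $\{v_i,v_j\}\in E$. If $$c(\{v_i,v_j\}) > d_{pc}(v_i,v_j),$$ then $\{v_i,v_j\}$ is not contained in any optimal solution of the instance.
   Context: A prize-collecting Steiner tree (PCSTP) instance $(V,E,c,p)$ consists of a finite, undirected, connected graph $G=(V,E)$, edge costs $c:E\to\mathbb{Q}_{>0}$ and vertex prizes $p:V\to\mathbb{Q}_{\ge 0}$. For a tree $S\subseteq G$ (connected acyclic subgraph with at least one vertex) let $C(S):=\sum_{e\in E(S)}c(e)+\sum_{v\in V\setminus V(S)}p(v)$; an optimal solution is a tree minimizing $C$. Let $T_p:=\{v\in V: p(v)>0\}$ (potential terminals). For $v_i,v_j\in V$, a finite walk $W=(v_{i_1},e_{i_1},v_{i_2},\dots,e_{i_{r-1}},v_{i_r})$ with $v_{i_1}=v_i$, $v_{i_r}=v_j$ is a prize-constrained $(v_i,v_j)$-walk if no vertex of $T_p\cup\{v_i,v_j\}$ occurs more than once in the sequence. $V(W)$, $E(W)$ denote the sets of vertices and edges of $W$. For $1\le k\le l\le r$, $W[k,l]$ denotes the subwalk $(v_{i_k},e_{i_k},\dots,v_{i_l})$ (itself a prize-constrained $(v_{i_k},v_{i_l})$-walk). The prize-collecting cost of a walk $W$ from $a$ to $b$ is $c_{pc}(W):=\sum_{e\in E(W)}c(e)-\sum_{v\in V(W)\setminus\{a,b\}}p(v)$. The prize-constrained length of a prize-constrained $(v_i,v_j)$-walk $W$ is $l_{pc}(W):=\max\{c_{pc}(W[k,l]) : 1\le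 k\le l\le r,\ v_{i_k},v_{i_l}\in T_p\cup\{v_i,v_j\}\}$. The prize-constrained distance is $d_{pc}(v_i,v_j):=\inf\{l_{pc}(W): W \text{ a prize-constrained } (v_i,v_j)\text{-walk}\}$. *)

(* Defs.v *)
From HB Require Import structures.
From mathcomp Require Import all_boot all_order all_algebra.
Set Implicit Arguments. Unset Strict Implicit. Unset Printing Implicit Defensive.
Import Order.TTheory GRing.Theory Num.Theory.
Local Open Scope ring_scope.

Section PCSTP.
Variable V : finType.

(* A simple undirected graph: edges are 2-element vertex sets. *)
Definition adjE (E : {set {set V}}) : rel V := fun x y => [set x; y] \in E.

Definition Tp (p : V -> rat) : {set V} := [set v | 0 < p v].

Definition tree_connected (VS : {set V}) (ES : {set {set V}}) : Prop :=
  forall u v, u \in VS -> v \in VS -> connect (adjE ES) u v.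

Definition tree_acyclic (ES : {set {set V}}) : Prop :=
  ~ (exists cyc : seq V, [&& (3 <= size cyc)%N, uniq cyc & cycle (adjE ES) cyc]).

Definition is_tree (E : {set {set V}}) (VS : {set V}) (ES : {set {set V}}) : Prop :=
  [/\ VS != set0, ES \subset E, (forall e, e \in ES -> e \subset VS),
      tree_connected VS ES & tree_acyclic ES].

Definition pcst_cost (c : {set V} -> rat) (p : V -> rat)
    (VS : {set V}) (ES : {set {set V}}) : rat :=
  \sum_(e in ES) c e + \sum_(v in ~: VS) p v.

Definition optimal (E : {set {set V}}) (c : {set V} -> rat) (p : V -> rat)
    (VS : {set V}) (ES : {set {set V}}) : Prop :=
  is_tree E VS ES /\
  forall VS' ES', is_tree E VS' ES' -> pcst_cost c p VS ES <= pcst_cost c p VS' ES'.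

Definition walk_edges (s : seq V) : seq {set V} :=
  if s is x :: t then pairmap (fun a b => [set a; b]) x t else [::].

Definition cpc (c : {set V} -> rat) (p : V -> rat) (s : seq V) : rat :=
  if s is x :: t then
    \sum_(e : {set V} | e \in walk_edges s) c e
    - \sum_(v : V | (v \in s) && (v \notin [set x; last x t])) p v
  else 0.

(* subwalk W[k,l] (0-indexed positions k <= l) *)
Definition subwalk (s : seq V) (k l : nat) : seq V := take (l - k).+1 (drop k s).

Definition pc_walk (E : {set {set V}}) (p : V -> rat) (vi vj : V) (s : seq V) : Prop :=
  exists t, s = vi :: t /\ path (adjE E) vi t /\ last vi t = vj /\
    forall x, x \in Tp p :|: [set vi; vj] -> (count_mem x s <= 1)%N.

(* The big max is seeded with c_pc(W) = c_pc(W[1,r]),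
   which is itself one of the maximised values, so this is exactly the maximum. *)
Definition lpc (c : {set V} -> rat) (p : V -> rat) (vi vj : V) (s : seq V) : rat :=
  let T := Tp p :|: [set vi; vj] in
  \big[Order.max/cpc c p s]_(k < size s)
    \big[Order.max/cpc c p s]_(l < size s |
        [&& (k <= l)%N, nth vi s k \in T & nth vi s l \in T])
      cpc c p (subwalk s k l).

(* "d_pc(vi,vj) < x", where d_pc is the infimum of l_pc over prize-constrained
   (vi,vj)-walks: by definition of the infimum, this holds iff some such walk
   has l_pc(W) < x. *)
Definition dpc_lt (E : {set {set V}}) (c : {set V} -> rat) (p : V -> rat)
    (vi vj : V) (x : rat) : Prop :=
  exists s, pc_walk E p vi vj s /\ lpc c p vi vj s < x.

End PCSTP.

(* Main.v *)
Require Import Defs.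
From HB Require Import structures.
From mathcomp Require Import all_boot all_order all_algebra.
From mathcomp Require Import lra zify.
From Stdlib Require Import Classical.
Import Order.TTheory GRing.Theory Num.Theory.
Local Open Scope ring_scope.

Module HelpM.
Set Implicit Arguments. Unset Strict Implicit.
Section Help.
Variable V : finType.
Implicit Types (E ES : {set {set V}}).

Lemma adjE_sym ES : symmetric (adjE ES).
Proof. by move=> x y; rewrite /adjE setUC. Qed.

Lemma connectC ES x y : connect (adjE ES) x y = connect (adjE ES) y x.
Proof. exact: (sym_connect_sym (adjE_sym ES)). Qed.

Lemma connect_mono E1 E2 : E1 \subset E2 ->
  forall x y, connect (adjE E1) x y -> connect (adjE E2) x y.
Proof. move=> sub x y; apply: connect_sub => u v H; apply: connect1; exact: (subsetP sub). Qed.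

Lemma path_avoid ES x0 x1 a s :
  path (adjE ES) a (rcons s x0) -> x0 \notin a :: s -> x1 \notin s ->
  (a == x1 -> s != [::]) ->
  path (adjE (ES :\ [set x0; x1])) a (rcons s x0).
Proof.
elim: s a => [|b s IH] a /=.
- rewrite andbT => Hax; rewrite inE => Hx0a _ Ha.
  rewrite andbT /adjE in_setD1; rewrite /adjE in Hax; rewrite Hax andbT.
  apply/negP => /eqP Heq.
  have : a \in [set x0; x1] by rewrite -Heq !inE eqxx.
  rewrite !inE => /orP[/eqP H|/eqP H].
  + by rewrite H eqxx in Hx0a.
  + by move: (Ha (introT eqP H)).
- move=> /andP[Hab Hp]; rewrite !inE negb_or => /andP[Hx0a Hx0bs].
  rewrite negb_or => /andP[Hx1b Hx1s] _.
  apply/andP; split; last first.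
    apply: IH => //.
    by move=> /eqP Hb; rewrite Hb eqxx in Hx1b.
  rewrite /adjE in_setD1; rewrite /adjE in Hab; rewrite Hab andbT.
  apply/negP => /eqP Heq.
  have : b \in [set x0; x1] by rewrite -Heq !inE eqxx orbT.
  rewrite !inE => /orP[/eqP H|/eqP H].
  + move: Hx0bs; rewrite H; move=> HH; exfalso; move: HH; rewrite ?inE ?eqxx //=.
    idtac.
  + by rewrite H eqxx in Hx1b.
Qed.

Lemma cycle_remove ES (cyc : seq V) : (3 <= size cyc)%N -> uniq cyc -> cycle (adjE ES) cyc ->
  exists e, e \in ES /\ forall x y, connect (adjE ES) x y -> connect (adjE (ES :\ e)) x y.
Proof.
case: cyc => [|x0 [|x1 rest]] //= Hs.
move=> /andP[Hx0 /andP[Hx1 _]] /andP[H01 Hp].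
exists [set x0; x1]; split => //.
have Hpa := @path_avoid ES x0 x1 x1 rest Hp Hx0 Hx1.
have Hpa' : path (adjE (ES :\ [set x0; x1])) x1 (rcons rest x0).
  apply: Hpa => _; by case: rest Hs {Hp Hx0 Hx1}.
have H10 : connect (adjE (ES :\ [set x0; x1])) x1 x0.
  by apply: (path_connect Hpa'); rewrite inE mem_rcons mem_head orbT.
have H01' : connect (adjE (ES :\ [set x0; x1])) x0 x1 by rewrite connectC.
apply: connect_sub => u v Huv.
case: (eqVneq [set u; v] [set x0; x1]) => Heq.
- have : u \in [set x0; x1] by rewrite -Heq !inE eqxx.
  have : v \in [set x0; x1] by rewrite -Heq !inE eqxx orbT.
  rewrite !inE => /orP[]/eqP-> /orP[]/eqP-> //.
- by apply: connect1; rewrite /adjE in_setD1 Heq.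
Qed.

Lemma span_tree E VS ES : VS != set0 -> ES \subset E ->
  (forall e, e \in ES -> e \subset VS) -> tree_connected VS ES ->
  exists2 ES2 : {set {set V}}, ES2 \subset ES & is_tree E VS ES2.
Proof.
move=> HV; have [n Hn] : exists n, (#|ES| <= n)%N by exists #|ES|.
elim: n ES Hn => [|n IH] ES Hn HE Hsub Hc.
all: case: (classic (exists cyc : seq V, [&& (3 <= size cyc)%N, uniq cyc & cycle (adjE ES) cyc])).
2,4: by move=> Hnc; exists ES => //; split.
all: move=> [cyc /and3P[H3 Hu Hcyc]].
all: have [e [HeES Hconn]] := @cycle_remove ES cyc H3 Hu Hcyc.
all: have Hcard := cardsD1 e ES; rewrite HeES in Hcard.
  by move: Hn; rewrite Hcard.
have h1 : (#|ES :\ e| <= n)%N by move: Hn; rewrite Hcard.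
have h2 : ES :\ e \subset E by exact: subset_trans (subD1set _ _) HE.
have h3 : forall e', e' \in ES :\ e -> e' \subset VS.
  by move=> e'; rewrite in_setD1 => /andP[_ /Hsub].
have h4 : tree_connected VS (ES :\ e).
  by move=> u v Hu1 Hv1; apply: Hconn; apply: Hc.
have [ES2 H2 Ht] := IH (ES :\ e) h1 h2 h3 h4.
by exists ES2 => //; apply: subset_trans H2 (subD1set _ _).
Qed.

Lemma wA (x : V) t : path (adjE [set e | e \in walk_edges (x :: t)]) x t.
Proof.
elim: t x => [|y t IH] x //=.
apply/andP; split; first by rewrite /adjE in_set in_cons eqxx.
apply: sub_path (IH y) => a b; rewrite /adjE !in_set /= in_cons => ->; exact: orbT.
Qed.

Lemma wB E (x : V) t : path (adjE E) x t ->
  forall e, e \in walk_edges (x :: t) -> e \in E /\ e \subset [set v | v \in x :: t].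
Proof.
elim: t x => [|y t IH] x //= /andP[Hxy Hp] e.
rewrite in_cons => /orP[/eqP-> | He].
- split => //; apply/subsetP => v; rewrite !inE => /orP[]/eqP->.
  + by rewrite eqxx.
  + by rewrite eqxx orbT.
- have [H1 H2] := IH y Hp e He; split => //.
  apply: subset_trans H2 _; apply/subsetP => v; rewrite !in_set => Hv; rewrite in_cons Hv; exact: orbT.
Qed.

End Help.
End HelpM.
Import HelpM.
Unset Implicit Arguments. Set Strict Implicit.
Theorem proposition1 (V : finType) (E : {set {set V}})
    (c : {set V} -> rat) (p : V -> rat)
    (HE : forall e, e \in E -> #|e| = 2%N)
    (Hconn : forall u v : V, connect (adjE E) u v)
    (Hc : forall e, e \in E -> 0 < c e)
    (Hp : forall v, 0 <= p v)
    (vi vj : V) (Hedge : [set vi; vj] \in E)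
    (Hd : dpc_lt E c p vi vj (c [set vi; vj])) :
  forall (VS : {set V}) (ES : {set {set V}}),
    optimal E c p VS ES -> [set vi; vj] \notin ES.
Proof.
move=> VS ES [[HVS0 HESE HESV HconnS HacS] Hopt]; apply/negP => He0.
set e0 := [set vi; vj] in Hedge Hd He0 *.
have Hneq : vi != vj.
  by move: (HE _ Hedge); rewrite /e0 cards2; case: (vi != vj).
have HviVS : vi \in VS by apply: (subsetP (HESV _ He0)); rewrite !inE eqxx.
have HvjVS : vj \in VS by apply: (subsetP (HESV _ He0)); rewrite !inE eqxx orbT.
set ES0 := ES :\ e0.
set A := [set v in VS | connect (adjE ES0) vi v].
have HvjA : vj \notin A.
  apply/negP; rewrite inE => /andP[_ Hcn].
  case/connectP: Hcn => pth Hp0 Hl.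
  move: Hl; case: (shortenP Hp0) => p' Hp' Hu' _ Hl.
  apply: HacS; exists (vi :: p'); apply/and3P; split => //.
  - case: p' Hp' Hu' Hl => [|y [|z q]] //=.
    + by move=> _ _ Hl; rewrite Hl eqxx in Hneq.
    + move=> /andP[Hy _] _ Hl; move: Hy; rewrite -Hl /adjE in_setD1 eqxx //.
  - rewrite /= rcons_path; apply/andP; split.
      by apply: sub_path Hp' => a b; rewrite /adjE in_setD1 => /andP[].
    by rewrite -Hl /adjE setUC.
have HQ : forall u, u \in VS -> connect (adjE ES0) vi u || connect (adjE ES0) vj u.
  pose Q := fun w => connect (adjE ES0) vi w || connect (adjE ES0) vj w.
  have gen : forall a pth, Q a -> path (adjE ES) a pth -> Q (last a pth).
    move=> a pth; elim: pth a => [|b pth IH] a //= Ha /andP[Hab Hpth].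
    apply: IH => //; rewrite /Q.
    case: (eqVneq [set a; b] e0) => Heq.
      have : b \in e0 by rewrite -Heq !inE eqxx orbT.
      by rewrite !inE => /orP[]/eqP->; rewrite connect0 ?orbT.
    have Hab' : adjE ES0 a b by rewrite /adjE in_setD1 Heq.
    case/orP: Ha => Ha.
      by rewrite (connect_trans Ha (connect1 Hab')).
    by rewrite (connect_trans Ha (connect1 Hab')) orbT.
  move=> u Hu; have := HconnS _ _ HviVS Hu; case/connectP => pth Hpth ->.
  by apply: (gen vi pth) => //; rewrite /Q connect0.
case: Hd => s [Hwalk Hlt]; case: Hwalk => t0 [Hs [Hpath [Hlast _]]].
set T := Tp p :|: [set vi; vj].
have Hn : size s = (size t0).+1 by rewrite Hs.
have Hs0 : nth vi s 0 = vi by rewrite Hs.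
have Hsn : nth vi s (size t0) = vj by rewrite Hs -Hlast; exact: (nth_last vi (vi :: t0)).
pose Pk := fun m => [&& (m < size s)%N, nth vi s m \in A & nth vi s m \in T].
have exPk : exists m, Pk m.
  exists 0%N; rewrite /Pk Hn Hs0 /= !inE HviVS connect0 eqxx orbT.
  done.
have ubPk : forall m, Pk m -> (m <= size s)%N by move=> m /and3P[/ltnW].
have [k /and3P[Hkn HkA HkT] Hkmax] := ex_maxnP exPk ubPk.
have Hkt : (k < size t0)%N.
  rewrite Hn ltnS leq_eqVlt in Hkn; case/orP: Hkn => // /eqP Hk.
  by rewrite Hk Hsn (negbTE HvjA) in HkA.
pose Pl := fun m => [&& (k < m)%N, (m < size s)%N, nth vi s m \in VS, nth vi s m \notin A & nth vi s m \in T].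
have exPl : exists m, Pl m.
  exists (size t0); rewrite /Pl Hkt Hn ltnSn Hsn HvjVS HvjA !inE eqxx !orbT.
  done.
have [l /and5P[Hkl Hln HlVS HlA HlT] Hlmin] := ex_minnP exPl.
have Hkl' : (k <= l)%N by apply: ltnW.
have Hsize : size (subwalk s k l) = (l - k).+1.
  rewrite /subwalk size_takel // size_drop; move: Hln Hkl'; clear; lia.
have Hnth : forall i, (i <= l - k)%N -> nth vi (subwalk s k l) i = nth vi s (k + i).
  by move=> i Hi; rewrite /subwalk nth_take ?ltnS // nth_drop.
set x := nth vi s k.
set t := behead (subwalk s k l).
have Hsub : subwalk s k l = x :: t.
  have := Hnth 0%N isT; rewrite addn0 /t -/x.
  by case: (subwalk s k l) Hsize => //= a b _ ->.
have Hst : size t = (l - k)%N by have := Hsize; rewrite Hsub => -[].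
have Hnth' : forall i, (i <= size t)%N -> nth vi (x :: t) i = nth vi s (k + i).
  by move=> i Hi; rewrite -Hsub Hnth // -Hst.
have Hlastt : last x t = nth vi s l.
  have -> : last x t = nth vi (x :: t) (size t) by rewrite (nth_last vi (x :: t)).
  rewrite Hnth' // Hst; congr nth; move: Hkl'; clear; lia.
have Hpt : path (adjE E) x t.
  apply/(pathP vi) => i Hi.
  have -> : nth vi t i = nth vi (x :: t) i.+1 by [].
  rewrite !Hnth' //; last by apply: ltnW.
  move/(pathP vi): Hpath => Hpp.
  have Hi2 : (k + i < size t0)%N.
    rewrite Hst in Hi; move: Hi Hln; rewrite Hn; clear; lia.
  have := Hpp _ Hi2.
  by rewrite -Hs addnS; have -> : nth vi t0 (k + i) = nth vi s (k + i).+1 by rewrite Hs.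
have Hmem : forall v, v \in x :: t -> exists2 i, (i <= l - k)%N & v = nth vi s (k + i).
  move=> v /(nthP vi) [i Hi <-]; exists i; first by rewrite -Hst.
  by rewrite Hnth' // -ltnS.
have Hzero : forall v, v \in x :: t -> v \notin [set x; last x t] -> v \in VS -> p v <= 0.
  move=> v /Hmem [i Hi Hv] Hends HvVS; rewrite leNgt; apply/negP => Hpos.
  have HvT : v \in T by rewrite !inE Hpos.
  have Hi0 : i != 0%N by apply/negP => /eqP Hi0; move: Hends; rewrite Hv Hi0 addn0 !inE eqxx.
  have Hil : (k + i != l)%N by apply/negP => /eqP Hil; move: Hends; rewrite Hlastt Hv Hil !inE eqxx orbT.
  have Hkin : (k + i < size s)%N by move: Hi Hln Hkl'; clear; lia.
  case: (boolP (v \in A)) => HvA.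
    have := Hkmax (k + i)%N; rewrite /Pk Hkin -Hv HvA HvT => /(_ isT).
    by move: Hi0; clear; lia.
  have := Hlmin (k + i)%N; rewrite /Pl Hkin -Hv HvA HvT HvVS.
  have -> : (k < k + i)%N by move: Hi0; clear; lia.
  by move=> /(_ isT); move: Hi Hil Hkl'; clear; lia.
set SUB := [set v | v \in x :: t].
set W := [set e | e \in walk_edges (x :: t)].
set VS' := VS :|: SUB.
set ES' := ES0 :|: W.
have HW : forall e, e \in W -> e \in E /\ e \subset SUB.
  by move=> e; rewrite in_set => /(wB Hpt).
have HxA : x \in A by [].
have HyVS : last x t \in VS by rewrite Hlastt.
have HyA : last x t \notin A by rewrite Hlastt.
have Hhub : forall u, u \in VS' -> connect (adjE ES') x u.
  move=> u; rewrite in_setU => /orP[Hu|Hu].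
    have HxvS : connect (adjE ES0) vi x by move: HxA; rewrite inE => /andP[].
    case/orP: (HQ u Hu) => Hcu.
      apply: (connect_mono (subsetUl ES0 W)).
      by apply: connect_trans Hcu; rewrite connectC.
    have Hy : connect (adjE ES0) vj (last x t).
      case/orP: (HQ _ HyVS) => // Hy.
      by move: HyA; rewrite inE HyVS Hy.
    apply: (@connect_trans _ _ (last x t)).
      apply: (connect_mono (subsetUr ES0 W)).
      by apply: (path_connect (wA x t)); rewrite mem_last.
    apply: (connect_mono (subsetUl ES0 W)).
    by apply: (@connect_trans _ _ vj) => //; rewrite connectC.
  apply: (connect_mono (subsetUr ES0 W)).
  by apply: (path_connect (wA x t)); move: Hu; rewrite in_set.
have HVS'0 : VS' != set0 by apply/set0Pn; exists vi; rewrite in_setU HviVS.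
have HES'E : ES' \subset E.
  apply/subsetP => e; rewrite in_setU => /orP[He|He].
    by apply: (subsetP HESE); move: He; rewrite in_setD1 => /andP[].
  by case: (HW e He).
have HES'V : forall e, e \in ES' -> e \subset VS'.
  move=> e; rewrite in_setU => /orP[He|He].
    apply: subset_trans (subsetUl VS SUB); apply: HESV.
    by move: He; rewrite in_setD1 => /andP[].
  apply: subset_trans (subsetUr VS SUB); by case: (HW e He).
have HconnS' : tree_connected VS' ES'.
  move=> u v Hu Hv; apply: (@connect_trans _ _ x); last exact: Hhub.
  by rewrite connectC; apply: Hhub.
have [ES2 HES2 Htree] := @span_tree _ E VS' ES' HVS'0 HES'E HES'V HconnS'.
have Hle := Hopt _ _ Htree.
have Hlpc : cpc c p (x :: t) <= lpc c p vi vj s.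
  rewrite -Hsub /lpc /=.
  apply: le_trans; last apply: (le_bigmax _ _ (Ordinal Hkn)).
  rewrite /=.
  apply: le_trans; last apply: (le_bigmax_cond _ (j := Ordinal Hln)).
    by [].
  by rewrite /= Hkl' HkT HlT.
have Hcpc : cpc c p (x :: t) = \sum_(e : {set V} | e \in walk_edges (x :: t)) c e
    - \sum_(v : V | (v \in x :: t) && (v \notin [set x; last x t])) p v by [].
have H1 : \sum_(e in ES) c e = c e0 + \sum_(e in ES0) c e := big_setD1 _ He0.
have Hcpos : forall e, e \in ES' -> 0 <= c e.
  by move=> e He; apply: ltW; apply: Hc; apply: (subsetP HES'E).
have H2 : \sum_(e in ES2) c e <= \sum_(e in ES0) c e + \sum_(e : {set V} | e \in walk_edges (x :: t)) c e.
  rewrite big_mkcond [X in _ <= X + _]big_mkcond [X in _ <= _ + X]big_mkcond -big_split /=.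
  apply: ler_sum => e _.
  have HeW : (e \in W) = (e \in walk_edges (x :: t)) by rewrite in_set.
  case: ifP => He2.
    have HeES' := subsetP HES2 _ He2.
    have Hce := Hcpos _ HeES'.
    move: HeES'; rewrite in_setU HeW.
    by case: (e \in ES0); case: (e \in walk_edges (x :: t)) => //= _; lra.
  case: ifP => HeA; case: ifP => HeB; rewrite ?addr0 ?add0r //.
  - by apply: addr_ge0; apply: Hcpos; rewrite in_setU ?HeA ?HeW ?HeB ?orbT.
  - by apply: Hcpos; rewrite in_setU HeA.
  - by apply: Hcpos; rewrite in_setU HeW HeB orbT.
have H3 : \sum_(v in ~: VS') p v + \sum_(v : V | (v \in x :: t) && (v \notin [set x; last x t])) p v
    <= \sum_(v in ~: VS) p v.
  rewrite big_mkcond [X in _ + X <= _]big_mkcond [X in _ <= X]big_mkcond -big_split /=.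
  apply: ler_sum => v _.
  have Hpv := Hp v.
  have Hz := Hzero v.
  have HvVS' : (v \in VS') = (v \in VS) || (v \in x :: t) by rewrite /VS' in_setU /SUB in_set.
  rewrite !in_setC HvVS'.
  case: (boolP (v \in VS)) => HvVS; case: (boolP (v \in x :: t)) => Hvt;
    case: (boolP (v \in [set x; last x t])) => Hve /=; rewrite ?addr0 ?add0r //=;
    try first [ lra | (have := Hz Hvt Hve HvVS; lra) ].
move: Hle; rewrite /pcst_cost => Hle.
move: Hlt; rewrite -/e0 => Hlt.
move: H1 H2 H3 Hle Hlt Hlpc Hcpc.
move: (\sum_(e in ES) c e) (\sum_(e in ES0) c e) (\sum_(e in ES2) c e)
  (\sum_(e : {set V} | e \in walk_edges (x :: t)) c e)
  (\sum_(v in ~: VS) p v) (\sum_(v in ~: VS') p v)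
  (\sum_(v : V | (v \in x :: t) && (v \notin [set x; last x t])) p v)
  (lpc c p vi vj s) (c e0) (cpc c p (x :: t)) => a1 a2 a3 a4 b1 b2 b3 L C0 K.
move=> h1 h2 h3 h4 h5 h6 h7; clear -h1 h2 h3 h4 h5 h6 h7.
lra.
Qed.
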